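(* Let $f \in \mathrm{Inj}(\Omega)$ have at least one infinite cycle, and let $n \in \mathbb{Z}_+$ with $(f)\mathrm{C}_n > 0$. Then there is a transposition $h \in \mathrm{Fin}(\Omega)$ such that $(fh)\mathrm{C}_n = (f)\mathrm{C}_n - 1$ and $(fh)\mathrm{C}_m = (f)\mathrm{C}_m$ for all $m \in \mathbb{Z}_+ \setminus \{n\}$ (where, if $(f)\mathrm{C}_n=\aleph_0$, $(f)\mathrm{C}_n-1$ means $\aleph_0$).
   Context: $\Omega$ is a countably infinite set; maps are written on the right and composed left to right. $\mathrm{Inj}(\Omega)$ is the monoid of injective maps $\Omega\to\Omega$; $\mathrm{Fin}(\Omega)$ the group of permutations moving only finitely many points. For $f\in\mathrm{Inj}(\Omega)$, a cycle of $f$ is a nonempty $\Sigma\subseteq\Omega$ such that (a) for all $\alpha\in\Omega$, $(\alpha)f\in\Sigma$ iff $\alpha\in\Sigma$, and (b) no proper nonempty subset of $\Sigma$ satisfies (a). For $n\in\mathbb{Z}_+$, $(f)\mathrm{C}_n$ is the cardinal number of cycles of $f$ of cardinality $n$. *)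

(* Defs.v *)
From Stdlib Require Import List Arith.
Import ListNotations.

Definition countably_infinite (T : Type) : Prop :=
  exists e : nat -> T,
    (forall x y, e x = e y -> x = y) /\ (forall y, exists x, e x = y).

Definition injective {T : Type} (f : T -> T) : Prop :=
  forall x y, f x = f y -> x = y.

(* maps written on the right, composed left to right: (a)(fh) = ((a)f)h *)
Definition rcomp {T : Type} (f h : T -> T) : T -> T := fun a => h (f a).

Definition subset {T : Type} (A B : T -> Prop) : Prop := forall x, A x -> B x.
Definition set_eq {T : Type} (A B : T -> Prop) : Prop := forall x, A x <-> B x.
Definition nonempty {T : Type} (A : T -> Prop) : Prop := exists x, A x.

Definition f_closed {T : Type} (f : T -> T) (S : T -> Prop) : Prop :=
  forall a, S (f a) <-> S a.

Definition is_cycle {T : Type} (f : T -> T) (S : T -> Prop) : Prop :=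
  nonempty S /\ f_closed f S /\
  forall S', subset S' S -> nonempty S' -> f_closed f S' -> subset S S'.

Definition has_card {T : Type} (S : T -> Prop) (n : nat) : Prop :=
  exists l : list T, NoDup l /\ length l = n /\ forall x, S x <-> In x l.

Definition is_finite_set {T : Type} (S : T -> Prop) : Prop := exists n, has_card S n.

Definition n_cycle {T : Type} (f : T -> T) (n : nat) (S : T -> Prop) : Prop :=
  is_cycle f S /\ has_card S n.

(* Cardinal numbers that can occur here: Some k = k (finite), None = aleph_0.
   The family of n-cycles (sets counted up to extensional equality) is countable,
   since its members are pairwise distinct finite subsets of a countable set. *)
Definition Cn_is {T : Type} (f : T -> T) (n : nat) (c : option nat) : Prop :=
  match c with
  | Some k =>
      exists L : list (T -> Prop),
        length L = k /\
        (forall S, In S L -> n_cycle f n S) /\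
        (forall i j d, i < k -> j < k -> i <> j ->
            ~ set_eq (nth i L d) (nth j L d)) /\
        (forall S, n_cycle f n S -> exists S', In S' L /\ set_eq S S')
  | None =>
      forall k, exists L : list (T -> Prop),
        length L = k /\
        (forall S, In S L -> n_cycle f n S) /\
        (forall i j d, i < k -> j < k -> i <> j ->
            ~ set_eq (nth i L d) (nth j L d))
  end.

Definition card_pred (c : option nat) : option nat :=
  match c with Some k => Some (k - 1) | None => None end.

Definition is_transposition {T : Type} (h : T -> T) : Prop :=
  exists a b, a <> b /\ h a = b /\ h b = a /\
    forall x, x <> a -> x <> b -> h x = x.

(* Main.v *)
Require Import Defs.
From Stdlib Require Import List Arith Lia Classical ClassicalEpsilon FinFun.
Import ListNotations.

Section Gen.
Context {T : Type}.

Lemma closed_iter (f : T -> T) S x k : f_closed f S -> S x -> S (Nat.iter k f x).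
Proof. intros H Hx; induction k; simpl; auto. apply (proj2 (H _)); auto. Qed.

Lemma cyc_meet (f : T -> T) S X x : is_cycle f S -> f_closed f X -> S x -> X x -> subset S X.
Proof.
  intros [_ [HS Hm]] HX Sx Xx.
  assert (H: subset S (fun y => S y /\ X y)).
  { apply Hm. intros y [? ?]; auto. exists x; auto.
    intro y; split; intros [? ?]; split; try apply HS; try apply HX; auto. }
  intros y Hy; apply H; auto.
Qed.

Lemma has_card_eq (S S' : T -> Prop) m : set_eq S S' -> has_card S m -> has_card S' m.
Proof. intros E [l [? [? H]]]; exists l; repeat split; auto; intros Hx; [apply H, E|apply E, H]; auto. Qed.

Lemma card_uniq (S : T -> Prop) m k : has_card S m -> has_card S k -> m = k.
Proof.
  intros [l1 [N1 [L1 H1]]] [l2 [N2 [L2 H2]]].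
  assert (length l1 <= length l2) by (apply NoDup_incl_length; auto; intros x Hx; apply H2, H1; auto).
  assert (length l2 <= length l1) by (apply NoDup_incl_length; auto; intros x Hx; apply H1, H2; auto).
  lia.
Qed.

Lemma list_finite (A : T -> Prop) l : (forall x, A x -> In x l) -> is_finite_set A.
Proof.
  revert A; induction l as [|y l IH]; intros A H.
  - exists 0, []; split; [constructor|split; [reflexivity|]]. intros x; split; [intros Ax; apply (H x Ax)|intros []].
  - destruct (IH (fun x => A x /\ x <> y)) as [k [l' [N [L E]]]].
    { intros x [Ax Ne]; destruct (H x Ax); [congruence|auto]. }
    destruct (classic (A y)) as [Ay|Ny].
    + exists (S k), (y :: l'); repeat split; simpl; auto.
      * constructor; auto. intros Hi; apply E in Hi; tauto.
      * intros Ax. destruct (classic (x = y)); [left; auto|right; apply E; auto].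
      * intros [<-|Hi]; auto. apply E in Hi; tauto.
    + exists k, l'; repeat split; auto.
      * intros Ax; apply E; split; auto; intros ->; tauto.
      * intros Hi; apply E in Hi; tauto.
Qed.

Lemma subset_finite (A B : T -> Prop) m : subset A B -> has_card B m -> is_finite_set A.
Proof. intros Hs [l [_ [_ H]]]; apply (list_finite _ l); intros x Ax; apply H, Hs; auto. Qed.

Definition PW (L : list (T -> Prop)) := forall i j d, i < length L -> j < length L -> i <> j ->
   ~ set_eq (nth i L d) (nth j L d).

Lemma set_eq_sym (A B : T -> Prop) : set_eq A B -> set_eq B A.
Proof. intros H x; symmetry; auto. Qed.
Lemma set_eq_trans (A B C : T -> Prop) : set_eq A B -> set_eq B C -> set_eq A C.
Proof. intros H1 H2 x; rewrite (H1 x); auto. Qed.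

Lemma PW_cons x l : PW (x :: l) <-> (forall y, In y l -> ~ set_eq x y) /\ PW l.
Proof.
  split.
  - intros H; split.
    + intros y Hy E. destruct (In_nth l y x Hy) as [i [Hi Ei]].
      apply (H 0 (S i) x); simpl; try lia. rewrite Ei; auto.
    + intros i j d Hi Hj Hij. apply (H (S i) (S j) d); simpl; lia.
  - intros [H1 H2] i j d Hi Hj Hij. simpl in Hi, Hj.
    destruct i as [|i], j as [|j]; simpl; try lia.
    + apply H1, nth_In; lia.
    + intros E; apply (H1 (nth i l d)); [apply nth_In; lia|]. apply set_eq_sym; auto.
    + apply H2; lia.
Qed.

Lemma PW_remove (C : T -> Prop) L : PW L -> (exists S', In S' L /\ set_eq C S') ->
  exists L', length L' = length L - 1 /\ (forall S, In S L' <-> In S L /\ ~ set_eq S C) /\ PW L'.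
Proof.
  induction L as [|x l IH]; intros HP [S' [Hin E]]; [destruct Hin|].
  apply PW_cons in HP as [H1 H2].
  destruct (classic (set_eq x C)) as [Ex|Nx].
  - exists l; split; [simpl; lia|split; [intros S; split|]]; auto.
    + intros Hy; split; [simpl; auto|]. intros Ey. apply (H1 S); auto. apply (set_eq_trans _ C); auto. apply set_eq_sym; auto.
    + intros [[<-|Hy] Ny]; tauto.
  - destruct Hin as [<-|Hin]; [destruct Nx; apply set_eq_sym; auto|].
    destruct (IH H2 (ex_intro _ S' (conj Hin E))) as [l' [Ll [El Pl]]].
    exists (x :: l'); split; [|split; [intros S; split|]].
    + destruct l; simpl in *; [destruct Hin|]. lia.
    + intros [<-|Hy]; [split; [left; auto|auto]|]. apply El in Hy as [? ?]; split; [right|]; auto.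
    + intros [[<-|Hy] Ny]; [left; auto|]. right; apply El; auto.
    + apply PW_cons; split; auto. intros y Hy; apply H1, El; auto.
Qed.

Lemma Cn_ext (f g : T -> T) m d : (forall S, n_cycle f m S <-> n_cycle g m S) ->
  (Cn_is f m d <-> Cn_is g m d).
Proof.
  intros H; destruct d as [k|]; simpl.
  - split; intros [L [H1 [H2 [H3 H4]]]]; exists L; (split; [exact H1|split; [|split; [exact H3|]]]).
    + intros S0 HS; apply (proj1 (H S0)); auto.
    + intros S0 HS; apply H4, (proj2 (H S0)); auto.
    + intros S0 HS; apply (proj2 (H S0)); auto.
    + intros S0 HS; apply H4, (proj1 (H S0)); auto.
  - split; intros H0 k; destruct (H0 k) as [L [H1 [H2 H3]]]; exists L; (split; [exact H1|split; [|exact H3]]);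
      intros S0 HS; [apply (proj1 (H S0))|apply (proj2 (H S0))]; auto.
Qed.
End Gen.

Section Orb.
Context {T : Type} (f : T -> T) (Hf : injective f).

Lemma iter_cancel a i q : Nat.iter (i + q) f a = Nat.iter i f a -> Nat.iter q f a = a.
Proof. induction i; simpl; auto. Qed.

Lemma cyc_bound C n a p : is_cycle f C -> C a -> has_card C n -> 0 < p ->
  Nat.iter p f a = a -> n <= p.
Proof.
  intros HC Ca [l [N [L E]]] Hp Hper.
  set (O := fun x => exists j, j < p /\ x = Nat.iter j f a).
  assert (HO : subset C O).
  { destruct HC as [_ [Hcl Hm]]. apply Hm.
    - intros x [j [_ ->]]; apply closed_iter; auto.
    - exists a, 0; split; auto.
    - intros x; split.
      + intros [j [Hj Ej]]. destruct j as [|j].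
        * simpl in Ej. exists (p - 1); split; [lia|].
          apply Hf. rewrite Ej. destruct p as [|p']; [lia|].
          simpl in Hper |- *. rewrite Nat.sub_0_r. auto.
        * exists j; split; [lia|]. apply Hf; auto.
      + intros [j [Hj ->]]. destruct (Nat.eq_dec (S j) p).
        * exists 0; split; auto. simpl. rewrite <- e in Hper. exact Hper.
        * exists (S j); split; [lia|reflexivity]. }
  subst n.
  replace p with (length (map (fun j => Nat.iter j f a) (seq 0 p))) by (rewrite length_map, length_seq; auto).
  apply NoDup_incl_length; auto.
  intros x Hx. apply E, HO in Hx as [j [Hj Ex]].
  apply in_map_iff. exists j; split; [auto|apply in_seq; lia].
Qed.

Lemma cyc_period C n a : is_cycle f C -> C a -> has_card C n -> 0 < n ->
  Nat.iter n f a = a.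
Proof.
  intros HC Ca Hcard Hn.
  destruct (classic (exists p, 0 < p <= n /\ Nat.iter p f a = a)) as [[p [Hp Ep]]|Hno].
  - assert (n <= p) by (eapply cyc_bound; eauto; lia).
    replace n with p by lia; auto.
  - exfalso. destruct Hcard as [l [N [L E]]].
    assert (Hnd : NoDup (map (fun j => Nat.iter j f a) (seq 0 (S n)))).
    { apply Injective_map_NoDup_in; [|apply seq_NoDup].
      intros i j Hi Hj Eij. apply in_seq in Hi, Hj.
      destruct (Nat.lt_trichotomy i j) as [Hl|[?|Hl]]; auto; exfalso; apply Hno.
      - exists (j - i); split; [lia|]. apply (iter_cancel a i).
        replace (i + (j - i)) with j by lia; auto.
      - exists (i - j); split; [lia|]. apply (iter_cancel a j).
        replace (j + (i - j)) with i by lia; auto. }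
    apply NoDup_incl_length with (l' := l) in Hnd.
    + rewrite length_map, length_seq in Hnd. lia.
    + intros x Hx. apply in_map_iff in Hx as [j [<- _]].
      apply E. apply closed_iter; auto. apply HC.
Qed.
End Orb.

Theorem mainTheorem10 (T : Type) (HT : countably_infinite T)
  (f : T -> T) (Hf : injective f)
  (Hinf : exists S, is_cycle f S /\ ~ is_finite_set S)
  (n : nat) (Hn : 0 < n) (c : option nat) (Hc : Cn_is f n c) (Hpos : c <> Some 0) :
  exists h : T -> T, is_transposition h /\
    Cn_is (rcomp f h) n (card_pred c) /\
    (forall m d, 0 < m -> m <> n -> (Cn_is (rcomp f h) m d <-> Cn_is f m d)).
Proof.
  destruct Hinf as [I [HI HIinf]].
  assert (HC0 : exists C, n_cycle f n C).
  { destruct c as [k|]; simpl in Hc.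
    - destruct Hc as [L [HL [H2 _]]]. destruct L as [|x L]; [simpl in HL; subst; congruence|].
      exists x; apply H2; left; auto.
    - destruct (Hc 1) as [L [HL [H2 _]]]. destruct L as [|x L]; [discriminate|].
      exists x; apply H2; left; auto. }
  destruct HC0 as [C [HCc HCcard]].
  destruct (proj1 HCc) as [a Ca]. destruct (proj1 HI) as [b Ib].
  assert (Hnb : ~ C b).
  { intros Cb. apply HIinf. apply (subset_finite I C n); auto.
    apply (cyc_meet f I C b); auto. apply HCc. }
  assert (Hab : a <> b) by (intros ->; auto).
  set (h := fun x => if excluded_middle_informative (x = a) then b
                     else if excluded_middle_informative (x = b) then a else x).
  assert (ha : h a = b) by (unfold h; destruct (excluded_middle_informative (a = a)); congruence).
  assert (hb : h b = a) by (unfold h; destruct (excluded_middle_informative (b = a)); [congruence|];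
    destruct (excluded_middle_informative (b = b)); congruence).
  assert (hx : forall x, x <> a -> x <> b -> h x = x) by (intros x H1 H2; unfold h;
    destruct (excluded_middle_informative (x = a)); [congruence|];
    destruct (excluded_middle_informative (x = b)); congruence).
  set (g := rcomp f h).
  assert (Hgi : forall k, k < n -> Nat.iter k g a = Nat.iter k f a).
  { induction k; intros Hk; simpl; auto. rewrite IHk by lia. unfold g, rcomp.
    apply hx.
    - intros E. assert (n <= S k) by (eapply (cyc_bound f Hf C n a (S k)); eauto; lia). lia.
    - intros E. apply Hnb. rewrite <- E. apply (closed_iter f C a (S k)); auto. apply HCc. }
  assert (Hgn : Nat.iter n g a = b).
  { destruct n as [|n']; [lia|]. simpl. rewrite Hgi by lia. unfold g, rcomp.
    change (f (Nat.iter n' f a)) with (Nat.iter (S n') f a).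
    rewrite (cyc_period f Hf C (S n') a); auto. }
  assert (K2 : forall S, f_closed g S -> (S a <-> S b)).
  { intros S HS.
    assert (fw : forall S, f_closed g S -> S a -> S b).
    { intros S0 H0 Sa. rewrite <- Hgn. apply closed_iter; auto. }
    split; [apply fw; auto|].
    intros Sb. apply NNPP; intros Na.
    apply (fw (fun x => ~ S x)); auto. intros x; specialize (HS x); tauto. }
  assert (Hh : forall S, (S a <-> S b) -> forall y, S (h y) <-> S y).
  { intros S HS y. destruct (classic (y = a)) as [->|Na]; [rewrite ha; tauto|].
    destruct (classic (y = b)) as [->|Nb]; [rewrite hb; tauto|]. rewrite hx; tauto. }
  assert (K1 : forall S, (S a <-> S b) -> (f_closed f S <-> f_closed g S)).
  { intros S HS; unfold f_closed, g, rcomp; split; intros H x;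
      specialize (Hh S HS (f x)); specialize (H x); tauto. }
  assert (Char : forall S m, has_card S m -> (is_cycle g S <-> is_cycle f S /\ ~ S a)).
  { intros S m Hm; split.
    - intros [Sne [Scl Smin]].
      pose proof (K2 S Scl) as Hs. apply (proj2 (K1 S Hs)) in Scl as Sf.
      assert (Na : ~ S a).
      { intros Sa. apply HIinf. apply (subset_finite I S m); auto.
        apply (cyc_meet f I S b); auto. apply Hs; auto. }
      split; [|exact Na]. split; [exact Sne|split; [exact Sf|]].
      intros S' Hsub Hne Hcl. apply Smin; auto.
      assert (HS' : S' a <-> S' b).
      { split; intros H; exfalso; [apply Na|apply Na, Hs]; apply Hsub; auto. }
      apply (proj1 (K1 S' HS')); auto.
    - intros [[Sne [Scl Smin]] Na].
      assert (Nb : ~ S b).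
      { intros Sb. apply HIinf. apply (subset_finite I S m); auto.
        apply (cyc_meet f I S b); auto. }
      assert (Hs : S a <-> S b) by tauto.
      split; auto. split; [apply (proj1 (K1 S Hs)); auto|].
      intros S' Hsub Hne Hcl. apply Smin; auto. apply (proj2 (K1 S' (K2 S' Hcl))); auto. }
  assert (HmC : forall S, is_cycle f S -> S a -> set_eq S C).
  { intros S HS Sa x; split; intros Hx.
    - apply (cyc_meet f S C a); auto. apply HCc.
    - apply (cyc_meet f C S a); auto. apply HS. }
  assert (CharN : forall S, n_cycle g n S <-> n_cycle f n S /\ ~ set_eq S C).
  { intros S; split.
    - intros [Hc1 Hc2]. apply (Char S n Hc2) in Hc1 as [H1 H2].
      split; [split; auto|]. intros E; apply H2, E; auto.
    - intros [[Hc1 Hc2] Ne]. split; [|exact Hc2]. apply (Char S n Hc2). split; [exact Hc1|].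
      intros Sa; apply Ne, HmC; auto. }
  exists h; split; [|split].
  - exists a, b; repeat split; auto.
  - destruct c as [k|]; simpl in Hc |- *.
    + destruct Hc as [L [HL [H2 [H3 H4]]]].
      assert (PL : PW L) by (intros i j d Hi Hj; apply H3; lia).
      destruct (PW_remove C L PL) as [L' [HL' [EL' PL']]].
      { destruct (H4 C (conj HCc HCcard)) as [S' [? ?]]; eauto. }
      exists L'; split; [lia|split; [|split]].
      * intros S HS. apply EL' in HS as [HS Ne]. apply (proj2 (CharN S)); split; auto.
      * intros i j d Hi Hj. apply PL'; lia.
      * intros S HS. apply (proj1 (CharN S)) in HS as [HS Ne].
        destruct (H4 S HS) as [S' [In' E']]. exists S'; split; auto.
        apply EL'; split; auto. intros E2; apply Ne. eapply set_eq_trans; eauto.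
    + intros k. destruct (Hc (S k)) as [L [HL [H2 H3]]].
      assert (PL : PW L) by (intros i j d Hi Hj; apply H3; lia).
      destruct (classic (exists S', In S' L /\ set_eq C S')) as [Ex|NEx].
      * destruct (PW_remove C L PL Ex) as [L' [HL' [EL' PL']]].
        exists L'; split; [lia|split].
        -- intros S HS. apply EL' in HS as [HS Ne]. apply (proj2 (CharN S)); split; auto.
        -- intros i j d Hi Hj. apply PL'; lia.
      * destruct L as [|x l]; [discriminate|]. apply PW_cons in PL as [_ Pl].
        exists l; split; [simpl in HL; lia|split].
        -- intros S HS. apply (proj2 (CharN S)); split; [apply H2; right; auto|].
           intros E; apply NEx. exists S; split; [right; auto|apply set_eq_sym; auto].
        -- intros i j d Hi Hj. apply Pl; simpl in HL; lia.
  - intros m d Hm Hmn. apply Cn_ext. intros S; split.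
    + intros [Hc1 Hc2]. apply (Char S m Hc2) in Hc1 as [H1 H2]. split; auto.
    + intros [Hc1 Hc2]. split; [|exact Hc2]. apply (Char S m Hc2); split; [exact Hc1|].
      intros Sa. apply Hmn. apply (card_uniq S); auto.
      apply (has_card_eq C); auto. apply set_eq_sym, HmC; auto.
Qed.
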